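(* Let $a_0,\dots,a_4,b_0,\dots,b_4>0$. Assume $Q<0$, $z_0>0$ (so that $\xi^{ext}_1,\dots,\xi^{ext}_4$ are real) and $\xi_{min}>0$. If either (a) $P_5(\xi_{min})=0$ or (b) $P_5(\xi_{max})=0$, then the quartic operator $\mathcal{Q}$ has at least two fixed points in $\mathbb{R}_>^2$, i.e. $N_>^{fix}(\mathcal{Q})\ge 2$.
   Context: Quartic operator on $\mathbb{R}_+^2=\{(x,y):x\ge0,y\ge0\}$: $\mathcal{Q}(x,y)=\big(\sum_{i=0}^4\binom{4}{i}a_i x^{4-i}y^i,\ \sum_{i=0}^4\binom{4}{i}b_i x^{4-i}y^i\big)$; $\mathbb{R}_>^2=\{(x,y):x>0,y>0\}$; $N_>^{fix}(\mathcal{Q})$ is the number of fixed points of $\mathcal{Q}$ in $\mathbb{R}_>^2$. Set $\mu_0=a_4$, $\mu_1=4a_3-b_4$, $\mu_2=6a_2-4b_3$, $\mu_3=4a_1-6b_2$, $\mu_4=a_0-4b_1$, $\mu_5=b_0$, and $P_5(\xi)=\mu_0\xi^5+\mu_1\xi^4+\mu_2\xi^3+\mu_3\xi^2+\mu_4\xi-\mu_5$. Define $p=\frac{15\mu_0\mu_2-6\mu_1^2}{25\mu_0^2}$, $q=\frac{50\mu_0^2\mu_3+8\mu_1^3-30\mu_0\mu_1\mu_2}{125\mu_0^3}$, $r=\frac{15\mu_0\mu_1^2\mu_2-50\mu_0^2\mu_1\mu_3-3\mu_1^4+125\mu_0^3\mu_4}{625\mu_0^4}$ (so that $\omega^4+p\omega^2+q\omega+r=P_5'(\omega-\frac{\mu_1}{5\mu_0})/(5\mu_0)$),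 $a=-\frac{p^2}{12}-r$, $b=-\frac{p^3}{108}+\frac{pr}{3}-\frac{q^2}{8}$, $Q=(a/3)^3+(b/2)^2$. When $Q<0$ (hence $a<0$), let $\alpha\in[0,\pi]$ with $\cos\alpha=-\frac{b}{2}\left(-\frac{3}{a}\right)^{3/2}$ and $z_0=2\sqrt{-a/3}\,\cos\!\left(\frac{2\pi}{3}+\frac{\alpha}{3}\right)-\frac{p}{3}$. For $z_0>0$ put $\xi^{ext}_{1,2}=\frac12\Big(\sqrt{2z_0}\pm\sqrt{2z_0-4\big(\frac p2+z_0+\frac{q}{2\sqrt{2z_0}}\big)}\Big)-\frac{\mu_1}{5\mu_0}$, $\xi^{ext}_{3,4}=\frac12\Big(-\sqrt{2z_0}\pm\sqrt{2z_0-4\big(\frac p2+z_0-\frac{q}{2\sqrt{2z_0}}\big)}\Big)-\frac{\mu_1}{5\mu_0}$, and $\xi_{min}=\min_j\xi^{ext}_j$, $\xi_{max}=\max_j\xi^{ext}_j$. *)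

(* Defs.v *)
From Stdlib Require Import Reals.
Open Scope R_scope.

Record coeffs := Coeffs {
  a0 : R; a1 : R; a2 : R; a3 : R; a4 : R;
  b0 : R; b1 : R; b2 : R; b3 : R; b4 : R }.

Definition Qop1 (c : coeffs) (x y : R) : R :=
  a0 c * x^4 + 4 * a1 c * x^3 * y + 6 * a2 c * x^2 * y^2
  + 4 * a3 c * x * y^3 + a4 c * y^4.
Definition Qop2 (c : coeffs) (x y : R) : R :=
  b0 c * x^4 + 4 * b1 c * x^3 * y + 6 * b2 c * x^2 * y^2
  + 4 * b3 c * x * y^3 + b4 c * y^4.

Definition is_pos_fixed_point (c : coeffs) (x y : R) : Prop :=
  0 < x /\ 0 < y /\ Qop1 c x y = x /\ Qop2 c x y = y.

Definition at_least_two_pos_fixed_points (c : coeffs) : Prop :=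
  exists x1 y1 x2 y2,
    is_pos_fixed_point c x1 y1 /\ is_pos_fixed_point c x2 y2 /\
    (x1, y1) <> (x2, y2).

Definition mu0 (c : coeffs) : R := a4 c.
Definition mu1 (c : coeffs) : R := 4 * a3 c - b4 c.
Definition mu2 (c : coeffs) : R := 6 * a2 c - 4 * b3 c.
Definition mu3 (c : coeffs) : R := 4 * a1 c - 6 * b2 c.
Definition mu4 (c : coeffs) : R := a0 c - 4 * b1 c.
Definition mu5 (c : coeffs) : R := b0 c.

Definition P5 (c : coeffs) (xi : R) : R :=
  mu0 c * xi^5 + mu1 c * xi^4 + mu2 c * xi^3 + mu3 c * xi^2 + mu4 c * xi - mu5 c.

Definition pp (c : coeffs) : R :=
  (15 * mu0 c * mu2 c - 6 * (mu1 c)^2) / (25 * (mu0 c)^2).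
Definition qq (c : coeffs) : R :=
  (50 * (mu0 c)^2 * mu3 c + 8 * (mu1 c)^3 - 30 * mu0 c * mu1 c * mu2 c)
  / (125 * (mu0 c)^3).
Definition rr (c : coeffs) : R :=
  (15 * mu0 c * (mu1 c)^2 * mu2 c - 50 * (mu0 c)^2 * mu1 c * mu3 c
   - 3 * (mu1 c)^4 + 125 * (mu0 c)^3 * mu4 c) / (625 * (mu0 c)^4).

Definition aa (c : coeffs) : R := - (pp c)^2 / 12 - rr c.
Definition bb (c : coeffs) : R :=
  - (pp c)^3 / 108 + pp c * rr c / 3 - (qq c)^2 / 8.
Definition QQ (c : coeffs) : R := (aa c / 3)^3 + (bb c / 2)^2.

(* (-3/a)^(3/2), for a < 0, written as (-3/a) * sqrt(-3/a) *)
Definition cos_alpha (c : coeffs) : R :=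
  - (bb c / 2) * ((- 3 / aa c) * sqrt (- 3 / aa c)).

Definition z0 (c : coeffs) (alpha : R) : R :=
  2 * sqrt (- aa c / 3) * cos (2 * PI / 3 + alpha / 3) - pp c / 3.

Definition shift (c : coeffs) : R := mu1 c / (5 * mu0 c).

Definition xi_ext1 (c : coeffs) (alpha : R) : R :=
  let z := z0 c alpha in
  (sqrt (2 * z) + sqrt (2 * z - 4 * (pp c / 2 + z + qq c / (2 * sqrt (2 * z))))) / 2
  - shift c.
Definition xi_ext2 (c : coeffs) (alpha : R) : R :=
  let z := z0 c alpha in
  (sqrt (2 * z) - sqrt (2 * z - 4 * (pp c / 2 + z + qq c / (2 * sqrt (2 * z))))) / 2
  - shift c.
Definition xi_ext3 (c : coeffs) (alpha : R) : R :=
  let z := z0 c alpha in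
  (- sqrt (2 * z) + sqrt (2 * z - 4 * (pp c / 2 + z - qq c / (2 * sqrt (2 * z))))) / 2
  - shift c.
Definition xi_ext4 (c : coeffs) (alpha : R) : R :=
  let z := z0 c alpha in
  (- sqrt (2 * z) - sqrt (2 * z - 4 * (pp c / 2 + z - qq c / (2 * sqrt (2 * z))))) / 2
  - shift c.

Definition xi_min (c : coeffs) (alpha : R) : R :=
  Rmin (Rmin (xi_ext1 c alpha) (xi_ext2 c alpha)) (Rmin (xi_ext3 c alpha) (xi_ext4 c alpha)).
Definition xi_max (c : coeffs) (alpha : R) : R :=
  Rmax (Rmax (xi_ext1 c alpha) (xi_ext2 c alpha)) (Rmax (xi_ext3 c alpha) (xi_ext4 c alpha)).

(* Main.v *)
Require Import Defs.
From Stdlib Require Import Reals Lra Psatz.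
From Coquelicot Require Import Coquelicot.
Open Scope R_scope.

Definition P5d (c : coeffs) (x : R) : R :=
  5 * mu0 c * x^4 + 4 * mu1 c * x^3 + 3 * mu2 c * x^2 + 2 * mu3 c * x + mu4 c.

Lemma P5_deriv c x : derivable_pt_lim (P5 c) x (P5d c x).
Proof.
  apply is_derive_Reals. unfold P5, P5d. auto_derive; auto. ring.
Qed.

Lemma P5_cont c : continuity (P5 c).
Proof.
  intro x. apply derivable_continuous_pt. exists (P5d c x). apply P5_deriv.
Qed.

Lemma P5_large c t : 0 < mu0 c -> exists X, t < X /\ 0 < P5 c X.
Proof.
  intros H0.
  set (S := Rabs (mu1 c) + Rabs (mu2 c) + Rabs (mu3 c) + Rabs (mu4 c) + Rabs (mu5 c)).
  exists (1 + Rabs t + S / mu0 c).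
  assert (HS : 0 <= S) by (unfold S; pose proof (Rabs_pos (mu1 c)); pose proof (Rabs_pos (mu2 c));
     pose proof (Rabs_pos (mu3 c)); pose proof (Rabs_pos (mu4 c)); pose proof (Rabs_pos (mu5 c)); lra).
  set (X := 1 + Rabs t + S / mu0 c).
  assert (HSm : 0 <= S / mu0 c) by (apply Rmult_le_pos; [lra | left; apply Rinv_0_lt_compat; lra]).
  assert (HX1 : 1 <= X) by (unfold X; pose proof (Rabs_pos t); lra).
  split. { unfold X. pose proof (Rle_abs t). lra. }
  assert (Hk : mu0 c * X > S).
  { unfold X. assert (mu0 c * (S / mu0 c) = S) by (field; lra).
    pose proof (Rabs_pos t). nra. }
  assert (H1 : 1 <= X^1) by (simpl; lra).
  assert (H2 : X^1 <= X^2) by (simpl; nra).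
  assert (H3 : X^2 <= X^3) by (simpl; nra).
  assert (H4 : X^3 <= X^4) by (simpl; nra).
  assert (L : forall m k, 0 <= k -> k <= X^4 -> - (Rabs m * X^4) <= m * k).
  { intros m k Hk0 Hk4. pose proof (Rabs_pos m).
    destruct (Rle_or_lt 0 m).
    - pose proof (Rmult_le_pos m k H5 Hk0). nra.
    - rewrite Rabs_left by lra. nra. }
  assert (HX4 : 0 <= X^4) by lra.
  pose proof (L (mu1 c) (X^4) HX4 (Rle_refl _)).
  pose proof (L (mu2 c) (X^3) ltac:(lra) ltac:(lra)).
  pose proof (L (mu3 c) (X^2) ltac:(lra) ltac:(lra)).
  pose proof (L (mu4 c) (X^1) ltac:(lra) ltac:(lra)).
  pose proof (L (- mu5 c) 1 ltac:(lra) ltac:(lra)).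
  rewrite Rabs_Ropp in H8.
  unfold P5.
  assert (E : mu0 c * X^5 = (mu0 c * X) * X^4) by ring.
  assert (0 < X^4) by lra.
  assert (S * X^4 < (mu0 c * X) * X^4) by nra.
  unfold S in *. simpl in *. nra.
Qed.

Definition Apol c t := a0 c + 4 * a1 c * t + 6 * a2 c * t^2 + 4 * a3 c * t^3 + a4 c * t^4.

Lemma fixed_of_root c t :
  0 < a0 c -> 0 < a1 c -> 0 < a2 c -> 0 < a3 c -> 0 < a4 c ->
  0 < t -> P5 c t = 0 -> exists x, is_pos_fixed_point c x (t * x).
Proof.
  intros ha0 ha1 ha2 ha3 ha4 ht HP.
  assert (HA : 0 < Apol c t).
  { unfold Apol. pose proof (pow_lt t 2 ht). pose proof (pow_lt t 3 ht). pose proof (pow_lt t 4 ht).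
    pose proof (Rmult_lt_0_compat _ _ ha1 ht). pose proof (Rmult_lt_0_compat _ _ ha2 H).
    pose proof (Rmult_lt_0_compat _ _ ha3 H0). pose proof (Rmult_lt_0_compat _ _ ha4 H1). lra. }
  set (x := Rpower (/ Apol c t) (1/3)).
  assert (Hx : 0 < x) by (unfold x, Rpower; apply exp_pos).
  assert (Hx3 : x^3 = / Apol c t).
  { rewrite <- Rpower_pow by exact Hx. unfold x. rewrite Rpower_mult.
    replace (1/3 * INR 3) with 1 by (simpl; field). apply Rpower_1.
    apply Rinv_0_lt_compat; exact HA. }
  assert (Hx3' : x^3 * Apol c t = 1) by (rewrite Hx3; field; lra).
  exists x. unfold is_pos_fixed_point. repeat split.
  - exact Hx.
  - nra.
  - unfold Qop1. unfold Apol in Hx3'.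
    transitivity (x * (x^3 * (a0 c + 4 * a1 c * t + 6 * a2 c * t^2 + 4 * a3 c * t^3 + a4 c * t^4))).
    + ring.
    + rewrite Hx3'. ring.
  - unfold Qop2. unfold P5, mu0, mu1, mu2, mu3, mu4, mu5 in HP. unfold Apol in Hx3'.
    transitivity (t * x * (x^3 * (a0 c + 4 * a1 c * t + 6 * a2 c * t^2 + 4 * a3 c * t^3 + a4 c * t^4))
       - x^4 * (a4 c * t ^ 5 + (4 * a3 c - b4 c) * t ^ 4 + (6 * a2 c - 4 * b3 c) * t ^ 3 +
      (4 * a1 c - 6 * b2 c) * t ^ 2 + (a0 c - 4 * b1 c) * t - b0 c)).
    + ring.
    + rewrite Hx3', HP. ring.
Qed.

Lemma two_roots c t1 t2 :
  0 < a0 c -> 0 < a1 c -> 0 < a2 c -> 0 < a3 c -> 0 < a4 c ->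
  0 < t1 -> 0 < t2 -> t1 <> t2 -> P5 c t1 = 0 -> P5 c t2 = 0 ->
  at_least_two_pos_fixed_points c.
Proof.
  intros ha0 ha1 ha2 ha3 ha4 h1 h2 hne e1 e2.
  destruct (fixed_of_root c t1 ha0 ha1 ha2 ha3 ha4 h1 e1) as [x1 F1].
  destruct (fixed_of_root c t2 ha0 ha1 ha2 ha3 ha4 h2 e2) as [x2 F2].
  exists x1, (t1 * x1), x2, (t2 * x2). split; [exact F1|split; [exact F2|]].
  intro E. injection E as E1 E2. subst x2. destruct F1 as [Hx _].
  apply hne. apply Rmult_eq_reg_r with x1; lra.
Qed.


Lemma sign4 x y z w : 0 < x -> y < 0 -> z < 0 -> w < 0 -> x * y * z * w < 0.
Proof. intros. assert (x*y<0) by nra. assert (x*y*z>0) by nra. nra. Qed.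
Lemma sign4' x y z w : x < 0 -> 0 < y -> 0 < z -> 0 < w -> x * y * z * w < 0.
Proof. intros. assert (x*y<0) by nra. assert (x*y*z<0) by nra. nra. Qed.

Lemma after_min c t r2 r3 r4 K :
  0 < K -> t < r2 -> t < r3 -> t < r4 -> P5 c t = 0 ->
  (forall x, P5d c x = K * ((x - t) * (x - r2) * (x - r3) * (x - r4))) ->
  exists t1, t < t1 /\ P5 c t1 < 0.
Proof.
  intros HK h2 h3 h4 HP HD.
  set (m := Rmin r2 (Rmin r3 r4)).
  assert (m2 : m <= r2) by apply Rmin_l.
  assert (m3 : m <= r3) by (eapply Rle_trans; [apply Rmin_r| apply Rmin_l]).
  assert (m4 : m <= r4) by (eapply Rle_trans; [apply Rmin_r| apply Rmin_r]).
  assert (tm : t < m) by (unfold m; repeat apply Rmin_glb_lt; auto).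
  exists ((t + m) / 2). split; [lra|].
  destruct (MVT_cor2 (P5 c) (P5d c) t ((t+m)/2) ltac:(lra) (fun x _ => P5_deriv c x)) as [z [Ez Hz]].
  assert (P5d c z < 0).
  { rewrite HD. assert (0 < (z - t) * (z - r2) * (z - r3) * (z - r4) -> False).
    { pose proof (sign4 (z-t) (z-r2) (z-r3) (z-r4) ltac:(lra) ltac:(lra) ltac:(lra) ltac:(lra)). lra. }
    pose proof (sign4 (z-t) (z-r2) (z-r3) (z-r4) ltac:(lra) ltac:(lra) ltac:(lra) ltac:(lra)). nra. }
  nra.
Qed.

Lemma before_max c t r2 r3 r4 K :
  0 < K -> r2 < t -> r3 < t -> r4 < t -> P5 c t = 0 ->
  (forall x, P5d c x = K * ((x - t) * (x - r2) * (x - r3) * (x - r4))) ->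
  exists t1, t1 < t /\ r2 < t1 /\ 0 < P5 c t1.
Proof.
  intros HK h2 h3 h4 HP HD.
  set (m := Rmax r2 (Rmax r3 r4)).
  assert (m2 : r2 <= m) by apply Rmax_l.
  assert (m3 : r3 <= m) by (eapply Rle_trans; [apply Rmax_l| apply Rmax_r]).
  assert (m4 : r4 <= m) by (eapply Rle_trans; [apply Rmax_r| apply Rmax_r]).
  assert (tm : m < t) by (unfold m; repeat apply Rmax_lub_lt; auto).
  exists ((t + m) / 2). split; [lra|]. split; [lra|].
  destruct (MVT_cor2 (P5 c) (P5d c) ((t+m)/2) t ltac:(lra) (fun x _ => P5_deriv c x)) as [z [Ez Hz]].
  assert (P5d c z < 0).
  { rewrite HD.
    pose proof (sign4' (z-t) (z-r2) (z-r3) (z-r4) ltac:(lra) ltac:(lra) ltac:(lra) ltac:(lra)). nra. }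
  nra.
Qed.

Lemma root_after c t1 :
  0 < mu0 c -> P5 c t1 < 0 -> exists t2, t1 < t2 /\ P5 c t2 = 0.
Proof.
  intros H0 H1. destruct (P5_large c t1 H0) as [X [HX1 HX2]].
  destruct (IVT (P5 c) t1 X (P5_cont c) HX1 H1 HX2) as [z [Hz Ez]].
  exists z. split; [|exact Ez]. destruct Hz as [Hz _]. destruct Hz; [auto|]. subst. lra.
Qed.

Lemma root_before c t1 :
  0 < mu5 c -> 0 < t1 -> 0 < P5 c t1 -> exists t2, 0 < t2 /\ t2 < t1 /\ P5 c t2 = 0.
Proof.
  intros H0 Ht H1.
  assert (P5 c 0 < 0) by (unfold P5; simpl; lra).
  destruct (IVT (P5 c) 0 t1 (P5_cont c) Ht H H1) as [z [Hz Ez]].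
  exists z. destruct Hz as [Hz1 Hz2].
  destruct Hz1 as [Hz1|Hz1]; [|subst; lra].
  destruct Hz2 as [Hz2|Hz2]; [|subst; lra]. auto.
Qed.

Section K.
Variables p q r m C s : R.
Hypothesis Hm : 0 < m.
Hypothesis HC1 : -1 < C.
Hypothesis HC2 : C < -1/2.
Hypothesis Hmm : m * m * 3 = p^2/12 + r.
Hypothesis Hcub : (2*m*C)^3 + (-p^2/12 - r)*(2*m*C) + (-p^3/108 + p*r/3 - q^2/8) = 0.
Variable z : R.
Hypothesis Hzd : z = 2*m*C - p/3.
Hypothesis Hz : 0 < z.
Hypothesis Hs : 0 < s.
Hypothesis Hss : s * s = 2 * z.

Lemma Hq2 : q^2 = 8 * z * ((z + p/2)^2 - r).
Proof using All. rewrite Hzd. replace r with (m*m*3 - p^2/12) in * by lra. nra. Qed.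

Lemma Hw : (q/s)^2 = 4 * ((z + p/2)^2 - r).
Proof using All.
  assert (E : (q/s)^2 = q^2 / (s*s)) by (field; lra).
  rewrite E, Hss, Hq2. field. exact (Rgt_not_eq _ _ Hz).
Qed.

Variables D1 D2 : R.
Hypothesis HD1 : D1 = 2*z - 4*(p/2 + z + q/(2*s)).
Hypothesis HD2 : D2 = 2*z - 4*(p/2 + z - q/(2*s)).

Lemma Dprod : D1 * D2 = 48 * m^2 * (1 - C^2).
Proof using All.
  assert (E : D1 * D2 = 4*(z+p)^2 - 4*(q/s)^2) by (rewrite HD1, HD2; field; lra).
  rewrite E, Hw. rewrite Hzd. replace r with (m*m*3 - p^2/12) by lra. field.
Qed.

Lemma Dsum : D1 + D2 = 8*z - 24*m*C.
Proof using All. rewrite HD1, HD2, Hzd. field. lra. Qed.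

Lemma D1pos : 0 < D1.
Proof using All.
  pose proof Dprod. pose proof Dsum.
  assert (0 < 48 * m^2 * (1 - C^2)).
  { assert (0<m^2) by (apply pow_lt; lra). assert (0 < 1 - C^2) by (simpl; nra). nra. }
  assert (0 < -24*m*C) by nra.
  assert (0 < z) by exact Hz.
  destruct (Rle_or_lt D1 0); [|auto]; destruct (Rle_or_lt D2 0); nra.
Qed.

Lemma D2pos : 0 < D2.
Proof using All.
  pose proof Dprod. pose proof Dsum.
  assert (0 < 48 * m^2 * (1 - C^2)).
  { assert (0<m^2) by (apply pow_lt; lra). assert (0 < 1 - C^2) by (simpl; nra). nra. }
  assert (0 < -24*m*C) by nra.
  assert (0 < z) by exact Hz.
  destruct (Rle_or_lt D2 0); [|auto]; destruct (Rle_or_lt D1 0); nra.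
Qed.

Variables u v : R.
Hypothesis Hu : 0 < u.
Hypothesis Hv : 0 < v.
Hypothesis Huu : u * u = D1.
Hypothesis Hvv : v * v = D2.

Lemma uv_sq : (u*v)^2 = 48 * m^2 * (1 - C^2).
Proof using All. rewrite <- Dprod. rewrite <- Huu, <- Hvv. ring. Qed.

Lemma big_diff : 4 * (s*s) < (u - v)^2.
Proof using All.
  pose proof uv_sq. pose proof Dsum.
  assert (uvp : 0 < u*v) by nra.
  assert (K : 2*(u*v) < -24*m*C).
  { assert (0 < -24*m*C) by nra.
    assert ((2*(u*v))^2 < (-24*m*C)^2).
    { replace ((2*(u*v))^2) with (4*(u*v)^2) by ring. rewrite H.
      assert (M1 : 0 < m^2) by (apply pow_lt; lra).
      assert (M2 : 0 < 768*C^2 - 192) by (simpl; nra).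
      replace ((-24*m*C)^2) with (576 * m^2 * C^2) by ring.
      pose proof (Rmult_lt_0_compat _ _ M1 M2). lra. }
    nra. }
  replace ((u-v)^2) with (u*u + v*v - 2*(u*v)) by ring. rewrite Huu, Hvv, H0, Hss. lra.
Qed.

Lemma big_sum : 4 * (s*s) < (u + v)^2.
Proof using All.
  pose proof Dsum. assert (uvp : 0 < u*v) by nra.
  assert (0 < -24*m*C) by nra.
  replace ((u+v)^2) with (u*u + v*v + 2*(u*v)) by ring. rewrite Huu, Hvv, H, Hss. lra.
Qed.

Lemma quartic_factor w :
  w^4 + p*w^2 + q*w + r =
  (w - (s+u)/2) * (w - (s-u)/2) * (w - (-s+v)/2) * (w - (-s-v)/2).
Proof using All.
  pose proof Hw.
  transitivity ((w^2 - s*w + (s*s - u*u)/4) * (w^2 + s*w + (s*s - v*v)/4)); [|field].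
  rewrite Huu, Hvv. rewrite HD1, HD2.
  replace (w^4 + p*w^2 + q*w + r) with (w^4 + p*w^2 + q*w + ((z+p/2)^2 - (q/s)^2/4)) by (rewrite H; field).
  transitivity ((w^2 + p/2 + z)^2 - (s*w - (q/s)/2)^2).
  - replace z with (s*s/2) by lra. field. lra.
  - replace z with (s*s/2) by lra. field. lra.
Qed.

End K.

Lemma min_case (e1 e2 e3 e4 K : R) (f : R -> R) :
  e1 <> e2 -> e1 <> e3 -> e1 <> e4 -> e2 <> e3 -> e2 <> e4 -> e3 <> e4 ->
  (forall x, f x = K*((x-e1)*(x-e2)*(x-e3)*(x-e4))) ->
  exists r2 r3 r4, Rmin (Rmin e1 e2) (Rmin e3 e4) < r2 /\ Rmin (Rmin e1 e2) (Rmin e3 e4) < r3 /\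
    Rmin (Rmin e1 e2) (Rmin e3 e4) < r4 /\
    forall x, f x = K*((x-Rmin (Rmin e1 e2) (Rmin e3 e4))*(x-r2)*(x-r3)*(x-r4)).
Proof.
  intros d12 d13 d14 d23 d24 d34 HD.
  unfold Rmin; destruct (Rle_dec e1 e2); destruct (Rle_dec e3 e4);
    [destruct (Rle_dec e1 e3)|destruct (Rle_dec e1 e4)|destruct (Rle_dec e2 e3)|destruct (Rle_dec e2 e4)].
  - exists e2, e3, e4. repeat split; try lra. intro x; rewrite HD; ring.
  - exists e1, e2, e4. repeat split; try lra. intro x; rewrite HD; ring.
  - exists e2, e3, e4. repeat split; try lra. intro x; rewrite HD; ring.
  - exists e1, e2, e3. repeat split; try lra. intro x; rewrite HD; ring.
  - exists e1, e3, e4. repeat split; try lra. intro x; rewrite HD; ring.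
  - exists e1, e2, e4. repeat split; try lra. intro x; rewrite HD; ring.
  - exists e1, e3, e4. repeat split; try lra. intro x; rewrite HD; ring.
  - exists e1, e2, e3. repeat split; try lra. intro x; rewrite HD; ring.
Qed.

Lemma max_case (e1 e2 e3 e4 K : R) (f : R -> R) :
  e1 <> e2 -> e1 <> e3 -> e1 <> e4 -> e2 <> e3 -> e2 <> e4 -> e3 <> e4 ->
  (forall x, f x = K*((x-e1)*(x-e2)*(x-e3)*(x-e4))) ->
  exists r2 r3 r4, r2 < Rmax (Rmax e1 e2) (Rmax e3 e4) /\ r3 < Rmax (Rmax e1 e2) (Rmax e3 e4) /\
    r4 < Rmax (Rmax e1 e2) (Rmax e3 e4) /\ Rmin (Rmin e1 e2) (Rmin e3 e4) <= r2 /\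
    forall x, f x = K*((x-Rmax (Rmax e1 e2) (Rmax e3 e4))*(x-r2)*(x-r3)*(x-r4)).
Proof.
  intros d12 d13 d14 d23 d24 d34 HD.
  assert (M1 : Rmin (Rmin e1 e2) (Rmin e3 e4) <= e1) by (unfold Rmin; repeat destruct Rle_dec; lra).
  assert (M2 : Rmin (Rmin e1 e2) (Rmin e3 e4) <= e2) by (unfold Rmin; repeat destruct Rle_dec; lra).
  assert (M3 : Rmin (Rmin e1 e2) (Rmin e3 e4) <= e3) by (unfold Rmin; repeat destruct Rle_dec; lra).
  assert (M4 : Rmin (Rmin e1 e2) (Rmin e3 e4) <= e4) by (unfold Rmin; repeat destruct Rle_dec; lra).
  revert M1 M2 M3 M4. generalize (Rmin (Rmin e1 e2) (Rmin e3 e4)). intros mn M1 M2 M3 M4.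
  unfold Rmax; destruct (Rle_dec e1 e2); destruct (Rle_dec e3 e4);
    [destruct (Rle_dec e2 e4)|destruct (Rle_dec e2 e3)|destruct (Rle_dec e1 e4)|destruct (Rle_dec e1 e3)].
  - exists e1, e2, e3. repeat split; try lra. intro x; rewrite HD; ring.
  - exists e1, e3, e4. repeat split; try lra. intro x; rewrite HD; ring.
  - exists e1, e2, e4. repeat split; try lra. intro x; rewrite HD; ring.
  - exists e1, e3, e4. repeat split; try lra. intro x; rewrite HD; ring.
  - exists e1, e2, e3. repeat split; try lra. intro x; rewrite HD; ring.
  - exists e2, e3, e4. repeat split; try lra. intro x; rewrite HD; ring.
  - exists e1, e2, e4. repeat split; try lra. intro x; rewrite HD; ring.
  - exists e2, e3, e4. repeat split; try lra. intro x; rewrite HD; ring.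
Qed.

Lemma cos3 t : cos (3*t) = 4*cos t^3 - 3*cos t.
Proof.
  replace (3*t) with (2*t + t) by ring. rewrite cos_plus, cos_2a_cos, sin_2a.
  pose proof (sin2_cos2 t). unfold Rsqr in H.
  replace (2 * sin t * cos t * sin t) with (2 * cos t * (sin t * sin t)) by ring.
  replace (sin t * sin t) with (1 - cos t * cos t) by lra. ring.
Qed.

Theorem theorem2 (c : coeffs) (alpha : R) :
  0 < a0 c -> 0 < a1 c -> 0 < a2 c -> 0 < a3 c -> 0 < a4 c ->
  0 < b0 c -> 0 < b1 c -> 0 < b2 c -> 0 < b3 c -> 0 < b4 c ->
  QQ c < 0 ->
  0 <= alpha <= PI -> cos alpha = cos_alpha c ->
  0 < z0 c alpha ->
  0 < xi_min c alpha ->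
  (P5 c (xi_min c alpha) = 0 \/ P5 c (xi_max c alpha) = 0) ->
  at_least_two_pos_fixed_points c.
Proof.
  intros ha0 ha1 ha2 ha3 ha4 hb0 hb1 hb2 hb3 hb4 HQ Hal Hcos Hz Hmin Hroot.
  assert (Ha : aa c < 0).
  { unfold QQ in HQ. destruct (Rle_or_lt 0 (aa c)); [|auto].
    assert (0 <= (aa c / 3)^3) by (apply pow_le; lra).
    assert (0 <= (bb c / 2)^2) by (apply pow2_ge_0). lra. }
  set (m := sqrt (- aa c / 3)).
  assert (Hm : 0 < m) by (unfold m; apply sqrt_lt_R0; lra).
  assert (Hmm : m * m = - aa c / 3) by (unfold m; apply sqrt_sqrt; lra).
  assert (Hsq : sqrt (-3 / aa c) = / m).
  { replace (-3 / aa c) with (/ (m*m)) by (rewrite Hmm; field; lra).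
    rewrite sqrt_inv, sqrt_square; lra. }
  assert (Hca : cos alpha = - (bb c / 2) / (m*m*m)).
  { rewrite Hcos. unfold cos_alpha. rewrite Hsq.
    replace (-3 / aa c) with (/ (m*m)) by (rewrite Hmm; field; lra). field. lra. }
  assert (Hb2 : (bb c / 2)^2 < (m*m*m)^2).
  { unfold QQ in HQ. replace (aa c / 3) with (- (m*m)) in HQ by lra. nra. }
  assert (Hc1 : cos alpha ^2 < 1).
  { rewrite Hca. assert (0 < m*m*m) by (apply Rmult_lt_0_compat; nra).
    replace ((- (bb c / 2) / (m*m*m))^2) with ((bb c / 2)^2 / ((m*m*m)^2)) by (field; lra).
    apply (Rmult_lt_reg_r ((m*m*m)^2)); [nra|]. field_simplify; lra. }
  assert (Ha0 : alpha <> 0) by (intro E; rewrite E, cos_0 in Hc1; lra).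
  assert (HaP : alpha <> PI) by (intro E; rewrite E, cos_PI in Hc1; lra).
  pose proof PI_RGT_0 as HPI.
  set (C := cos (2 * PI / 3 + alpha / 3)).
  assert (HC2 : C < -1/2).
  { assert (E : cos (2*PI/3) = -1/2).
    { replace (2*PI/3) with (PI - PI/3) by field. rewrite Rtrigo_facts.cos_pi_minus, cos_PI3. field. }
    rewrite <- E. unfold C. apply cos_decreasing_1; lra. }
  assert (HC1 : -1 < C).
  { rewrite <- cos_PI. unfold C. apply cos_decreasing_1; lra. }
  assert (Hc3 : cos alpha = 4*C^3 - 3*C).
  { unfold C. rewrite <- cos3. replace (3 * (2 * PI / 3 + alpha / 3)) with (alpha + 2*PI) by field.
    rewrite cos_plus, cos_2PI, sin_2PI. ring. }
  set (p := pp c). set (q := qq c). set (r := rr c).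
  assert (Hmm3 : m * m * 3 = p^2/12 + r) by (rewrite Hmm; unfold aa; unfold p, r; field).
  assert (Hcub : (2*m*C)^3 + (-p^2/12 - r)*(2*m*C) + (-p^3/108 + p*r/3 - q^2/8) = 0).
  { assert (Eb : bb c = -p^3/108 + p*r/3 - q^2/8) by (unfold bb; reflexivity).
    assert (Ea : aa c = -p^2/12 - r) by (unfold aa; reflexivity).
    rewrite <- Eb, <- Ea.
    assert (bb c = - 2 * (m*m*m) * (4*C^3 - 3*C)).
    { rewrite <- Hc3, Hca. field. nra. }
    rewrite H. replace (aa c) with (-3*(m*m)) by lra. ring. }
  set (z := z0 c alpha).
  assert (Hzd : z = 2*m*C - p/3) by reflexivity.
  assert (Hz' : 0 < z) by exact Hz.
  clear Hz. rename Hz' into Hz.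
  set (s := sqrt (2*z)).
  assert (Hs : 0 < s). { unfold s; apply sqrt_lt_R0; lra. }
  assert (Hss : s * s = 2*z) by (unfold s; apply sqrt_sqrt; lra).
  set (D1 := 2*z - 4*(p/2 + z + q/(2*s))).
  set (D2 := 2*z - 4*(p/2 + z - q/(2*s))).
  pose proof (D1pos p q r m C s Hm HC1 HC2 Hmm3 Hcub z Hzd Hz Hs Hss D1 D2 eq_refl eq_refl) as HD1.
  pose proof (D2pos p q r m C s Hm HC1 HC2 Hmm3 Hcub z Hzd Hz Hs Hss D1 D2 eq_refl eq_refl) as HD2.
  set (u := sqrt D1). set (v := sqrt D2).
  assert (Hu : 0 < u) by (unfold u, v; apply sqrt_lt_R0; lra).
  assert (Hv : 0 < v) by (unfold u, v; apply sqrt_lt_R0; lra).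
  assert (Huu : u * u = D1) by (unfold u, v; apply sqrt_sqrt; lra).
  assert (Hvv : v * v = D2) by (unfold u, v; apply sqrt_sqrt; lra).
  pose proof (big_diff p q r m C s Hm HC1 HC2 Hmm3 Hcub z Hzd Hz Hs Hss D1 D2 eq_refl eq_refl u v Hu Hv Huu Hvv) as Bd.
  pose proof (big_sum p q r m C s Hm HC1 HC2 Hmm3 Hcub z Hzd Hz Hs Hss D1 D2 eq_refl eq_refl u v Hu Hv Huu Hvv) as Bs.
  pose proof (quartic_factor p q r m C s Hm HC1 HC2 Hmm3 Hcub z Hzd Hz Hs Hss D1 D2 eq_refl eq_refl u v Hu Hv Huu Hvv) as QF.
  set (sh := shift c).
  assert (E1 : xi_ext1 c alpha = (s+u)/2 - sh) by reflexivity.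
  assert (E2 : xi_ext2 c alpha = (s-u)/2 - sh) by reflexivity.
  assert (E3 : xi_ext3 c alpha = (-s+v)/2 - sh) by reflexivity.
  assert (E4 : xi_ext4 c alpha = (-s-v)/2 - sh) by reflexivity.
  assert (HK : 0 < 5 * mu0 c) by (unfold mu0; lra).
  assert (HF : forall x, P5d c x = 5 * mu0 c * ((x - xi_ext1 c alpha) * (x - xi_ext2 c alpha)
                                    * (x - xi_ext3 c alpha) * (x - xi_ext4 c alpha))).
  { intro x. rewrite E1, E2, E3, E4.
    transitivity (5 * mu0 c * ((x+sh)^4 + p*(x+sh)^2 + q*(x+sh) + r)).
    - unfold P5d, sh, shift, p, q, r, pp, qq, rr. field. unfold mu0; lra.
    - rewrite QF. ring. }
  assert (sq : forall x y, 0 <= x -> 0 <= y -> x^2 = y^2 -> x = y).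
  { intros x y hx hy e. nra. }
  assert (d12 : xi_ext1 c alpha <> xi_ext2 c alpha) by (rewrite E1, E2; lra).
  assert (d34 : xi_ext3 c alpha <> xi_ext4 c alpha) by (rewrite E3, E4; lra).
  assert (d14 : xi_ext1 c alpha <> xi_ext4 c alpha) by (rewrite E1, E4; lra).
  assert (d13 : xi_ext1 c alpha <> xi_ext3 c alpha).
  { rewrite E1, E3. intro e. assert (v - u = 2*s) by lra. assert ((u-v)^2 = 4*(s*s)) by nra. lra. }
  assert (d23 : xi_ext2 c alpha <> xi_ext3 c alpha).
  { rewrite E2, E3. intro e. assert (u + v = 2*s) by lra. assert ((u+v)^2 = 4*(s*s)) by nra. lra. }
  assert (d24 : xi_ext2 c alpha <> xi_ext4 c alpha).
  { rewrite E2, E4. intro e. assert (u - v = 2*s) by lra. assert ((u-v)^2 = 4*(s*s)) by nra. lra. }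
  assert (Hmu0 : 0 < mu0 c) by (unfold mu0; lra).
  assert (Hmu5 : 0 < mu5 c) by (unfold mu5; lra).
  destruct Hroot as [Hr | Hr].
  - destruct (min_case _ _ _ _ _ _ d12 d13 d14 d23 d24 d34 HF) as [r2 [r3 [r4 [h2 [h3 [h4 HF']]]]]].
    fold (xi_min c alpha) in *.
    destruct (after_min c (xi_min c alpha) r2 r3 r4 _ HK h2 h3 h4 Hr HF') as [t1 [Ht1 Pt1]].
    destruct (root_after c t1 Hmu0 Pt1) as [t2 [Ht2 Pt2]].
    apply (two_roots c (xi_min c alpha) t2); auto; lra.
  - destruct (max_case _ _ _ _ _ _ d12 d13 d14 d23 d24 d34 HF) as [r2 [r3 [r4 [h2 [h3 [h4 [h5 HF']]]]]]].
    fold (xi_min c alpha) (xi_max c alpha) in *.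
    destruct (before_max c (xi_max c alpha) r2 r3 r4 _ HK h2 h3 h4 Hr HF') as [t1 [Ht1 [Hr2 Pt1]]].
    destruct (root_before c t1 Hmu5 ltac:(lra) Pt1) as [t2 [Ht2 [Ht2' Pt2]]].
    apply (two_roots c t2 (xi_max c alpha)); auto; lra.
Qed.
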